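(* Let $\mathcal{M}$ be a circular embedding of a connected graph $X$ with $\ell$ edges on a closed orientable surface of genus $g$. Let $M$, $N$ be its arc-face and arc-tail incidence matrices and $U$ its vertex-face transition matrix. Then the $1$-eigenspace of $U$ is \[(\operatorname{col}(M)\cap\operatorname{col}(N))\oplus(\ker(M^T)\cap\ker(N^T)),\] and it has dimension $\ell+2g$. Moreover, $\operatorname{col}(M)\cap\operatorname{col}(N)=\operatorname{span}\{\mathbf{1}\}$, where $\mathbf{1}$ is the all-ones vector.
   Context: Setting. A circular embedding is a cellular embedding in which every face is bounded by a cycle. Arcs are ordered pairs $(u,v)$ with $\{u,v\}$ an edge, and $u$ is the tail; there are $2\ell$ arcs. Consistent orientation. Fix an orientation of all face boundaries such that each edge shared by two faces receives opposite directions in them. Then every arc lies in exactly one facial walk. Matrices. $M$ is the $2\ell\times s$ arc-face incidence matrix ($M_{(a,b),f}=1$ iff $(a,b)$ lies in the facial walk of $f$). $N$ is the $2\ell\times n$ arc-tail incidence matrix ($N_{(a,b),u}=1$ iff $a=u$). $\widehat M,\widehat N$ are these matrices with each column scaled to unit length. The vertex-face transition matrix is $U=(2\widehat M\widehat M^T-I)(2\widehat N\widehat N^T-I)$. *)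

(* Defs.v *)
(* Circular embeddings encoded as combinatorial maps
   (rotation systems) on a finite type D of arcs (darts). *)
From HB Require Import structures.
From mathcomp Require Import all_boot all_order fingroup perm all_algebra.
From mathcomp Require Import reals.
Set Implicit Arguments. Unset Strict Implicit. Unset Printing Implicit Defensive.
Import Order.TTheory GRing.Theory Num.Theory.
Local Open Scope ring_scope.

(* A combinatorial map: theta sends the arc (u,v) to (v,u); rho is the
   rotation at each vertex (its orbits are the vertices, an arc belongs to
   the rho-orbit of its tail).  The face successor of (u,v) is
   rho (theta (u,v)) = (v,w), i.e. the permutation theta * rho
   (mathcomp composes left-to-right: (s * t) x = t (s x)). *)
Definition face_perm (D : finType) (theta rho : {perm D}) : {perm D} :=
  (theta * rho)%g.

Definition vertices (D : finType) (rho : {perm D}) : {set {set D}} :=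
  porbits rho.
Definition faces (D : finType) (theta rho : {perm D}) : {set {set D}} :=
  porbits (face_perm theta rho).

Definition arc_reversal (D : finType) (theta : {perm D}) : Prop :=
  forall d, theta (theta d) = d /\ theta d != d.

Definition map_connected (D : finType) (theta rho : {perm D}) : Prop :=
  forall d e : D, connect (fun x y => (y == rho x) || (y == theta x)) d e.

(* the underlying graph is simple: no loops, no parallel edges *)
Definition map_simple (D : finType) (theta rho : {perm D}) : Prop :=
  (forall d, theta d \notin porbit rho d) /\
  (forall d e, porbit rho d = porbit rho e ->
     porbit rho (theta d) = porbit rho (theta e) -> d = e).

(* circular: every facial walk is a cycle, i.e. it has length >= 3 and the
   tails of its arcs are pairwise distinct vertices *)
Definition circular (D : finType) (theta rho : {perm D}) : Prop :=
  forall d, (3 <= #|porbit (face_perm theta rho) d|)%N /\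
  forall e, e \in porbit (face_perm theta rho) d ->
     porbit rho e = porbit rho d -> e = d.

Definition arc (D : finType) (i : 'I_#|D|) : D := enum_val i.

Definition arc_face_mx (R : realType) (D : finType) (theta rho : {perm D})
  : 'M[R]_(#|D|, #|faces theta rho|) :=
  \matrix_(i, j) ((arc i \in (enum_val j : {set D})) %:R).

Definition arc_tail_mx (R : realType) (D : finType) (rho : {perm D})
  : 'M[R]_(#|D|, #|vertices rho|) :=
  \matrix_(i, j) ((arc i \in (enum_val j : {set D})) %:R).

Definition col_normalize (R : realType) m n (A : 'M[R]_(m, n)) : 'M[R]_(m, n) :=
  \matrix_(i, j) (A i j / Num.sqrt (\sum_k A k j ^+ 2)).

Definition transition_mx (R : realType) (D : finType) (theta rho : {perm D})
  : 'M[R]_#|D| :=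
  let Mh := col_normalize (arc_face_mx R theta rho) in
  let Nh := col_normalize (arc_tail_mx R rho) in
  (2%:R *: (Mh *m Mh^T) - 1%:M) *m (2%:R *: (Nh *m Nh^T) - 1%:M).

(* Main.v *)
Require Import Defs.
From HB Require Import structures.
From mathcomp Require Import all_boot all_order fingroup perm all_algebra.
From mathcomp Require Import reals.
From mathcomp Require Import zify.
Set Implicit Arguments. Unset Strict Implicit. Unset Printing Implicit Defensive.
Import Order.TTheory GRing.Theory Num.Theory.
Local Open Scope ring_scope.
Section Abs.
Variable (F : numFieldType) (m s n : nat).

Lemma refl_sq (A : 'M[F]_(m,s)) : A^T *m A = 1%:M ->
  (2%:R *: (A *m A^T) - 1%:M) *m (2%:R *: (A *m A^T) - 1%:M) = 1%:M.
Proof.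
move=> hA.
have PP : (A *m A^T) *m (A *m A^T) = A *m A^T by rewrite mulmxA -(mulmxA A) hA mulmx1.
rewrite mulmxBr mulmx1 mulmxBl mul1mx -scalemxAr -scalemxAl PP scalerA.
have -> : (2%:R * 2%:R : F) = 2%:R + 2%:R by rewrite -natrM -natrD.
rewrite scalerDl; set X := _ *: _.
by rewrite opprB addrA addrK addrAC subrr add0r.
Qed.

Lemma inE_char (A : 'M[F]_(m,s)) (B : 'M[F]_(m,n)) k (X : 'M[F]_(k,m)) :
  A^T *m A = 1%:M -> B^T *m B = 1%:M ->
  (X <= kermx (((2%:R *: (A *m A^T) - 1%:M) *m (2%:R *: (B *m B^T) - 1%:M)) - 1%:M)^T)%MS
  = (X *m (A *m A^T) == X *m (B *m B^T)).
Proof.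
move=> hA hB.
set P := A *m A^T; set Q := B *m B^T.
have tP : P^T = P by rewrite /P trmx_mul trmxK.
have tQ : Q^T = Q by rewrite /Q trmx_mul trmxK.
have tr : ((2%:R *: P - 1%:M) *m (2%:R *: Q - 1%:M) - 1%:M)^T
   = (2%:R *: Q - 1%:M) *m (2%:R *: P - 1%:M) - 1%:M.
  by rewrite linearB /= trmx_mul linearB /= linearB /= !linearZ /= tP tQ !trmx1.
rewrite tr; apply/sub_kermxP/eqP.
  rewrite mulmxBr mulmx1 => /eqP; rewrite subr_eq0 => /eqP h.
  have h2 : X *m (2%:R *: Q - 1%:M) = X *m (2%:R *: P - 1%:M).
    by rewrite -{2}h -!mulmxA refl_sq // mulmx1.
  move: h2; rewrite !mulmxBr !mulmx1 -!scalemxAr => /addIr h3.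
  have := congr1 (fun Y => 2%:R^-1 *: Y) h3; rewrite !scalerA mulVf ?scale1r //.
  by rewrite pnatr_eq0.
move=> h.
have h2 : X *m (2%:R *: Q - 1%:M) = X *m (2%:R *: P - 1%:M).
  by rewrite !mulmxBr -!scalemxAr h.
by rewrite mulmxBr mulmx1 mulmxA h2 -mulmxA refl_sq // mulmx1 subrr.
Qed.

Lemma decomp (A : 'M[F]_(m,s)) (B : 'M[F]_(m,n)) :
  A^T *m A = 1%:M -> B^T *m B = 1%:M ->
  let E := kermx (((2%:R *: (A *m A^T) - 1%:M) *m (2%:R *: (B *m B^T) - 1%:M)) - 1%:M)^T in
  let C := (A^T :&: B^T)%MS in let K := (kermx A :&: kermx B)%MS in
  (E :=: C + K)%MS /\ (C :&: K = 0)%MS.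
Proof.
move=> hA hB E C K.
have CA : (C <= A^T)%MS by exact: capmxSl.
have CB : (C <= B^T)%MS by exact: capmxSr.
have KA : K *m A = 0 by apply/sub_kermxP; exact: capmxSl.
have KB : K *m B = 0 by apply/sub_kermxP; exact: capmxSr.
split.
  apply/eqmxP; apply/andP; split.
    have hX : E *m (A *m A^T) = E *m (B *m B^T).
      by apply/eqP; rewrite -inE_char // submx_refl.
    have -> : E = E *m (A *m A^T) + (E - E *m (A *m A^T)) by rewrite addrC subrK.
    apply: addmx_sub_adds.
      rewrite sub_capmx; apply/andP; split; first by rewrite mulmxA submxMl.
      by rewrite hX mulmxA submxMl.
    rewrite sub_capmx; apply/andP; split; apply/sub_kermxP.
      by rewrite mulmxBl -!mulmxA hA mulmx1 subrr.
    by rewrite mulmxBl hX -!mulmxA hB mulmx1 subrr.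
  rewrite addsmx_sub; apply/andP; split; rewrite inE_char //.
    have e1 : C *m (A *m A^T) = C.
      by have [w ->] := submxP CA; rewrite mulmxA -(mulmxA w) hA mulmx1.
    have e2 : C *m (B *m B^T) = C.
      by have [w ->] := submxP CB; rewrite mulmxA -(mulmxA w) hB mulmx1.
    by rewrite e1 e2.
  by rewrite !mulmxA KA KB !mul0mx.
set Z := (C :&: K)%MS.
have ZA : (Z <= A^T)%MS by apply: submx_trans CA; exact: capmxSl.
have ZK : Z *m A = 0.
  by apply/sub_kermxP; apply: submx_trans (capmxSl _ _); exact: capmxSr.
have [w ew] := submxP ZA.
by move: ZK; rewrite ew -mulmxA hA mulmx1 => ->; rewrite mul0mx.
Qed.

Lemma rank_kercap (A : 'M[F]_(m,s)) (B : 'M[F]_(m,n)) :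
  \rank (kermx A :&: kermx B)%MS = (m - \rank (A^T + B^T)%MS)%N.
Proof.
have e : (kermx A :&: kermx B :=: kermx (row_mx A B))%MS.
  apply/eqmxP; apply/andP; split.
    apply/sub_kermxP; rewrite mul_mx_row.
    have h1 : (kermx A :&: kermx B <= kermx A)%MS by exact: capmxSl.
    have h2 : (kermx A :&: kermx B <= kermx B)%MS by exact: capmxSr.
    by rewrite (sub_kermxP h1) (sub_kermxP h2) row_mx0.
  have /sub_kermxP := submx_refl (kermx (row_mx A B)).
  rewrite mul_mx_row => /eqP; rewrite row_mx_eq0 => /andP[/eqP h1 /eqP h2].
  by rewrite sub_capmx; apply/andP; split; apply/sub_kermxP.
by rewrite e mxrank_ker -mxrank_tr tr_row_mx addsmxE.
Qed.

Lemma rank_orth (A : 'M[F]_(m,s)) : A^T *m A = 1%:M -> \rank A^T = s.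
Proof.
move=> hA; apply/eqP; rewrite eqn_leq rank_leq_row /=.
by rewrite -{1}(mxrank1 F s) -hA mxrankM_maxl.
Qed.
End Abs.
Section Inc.
Variables (R : realType) (D : finType) (sg : {perm D}).

Definition inc_mx : 'M[R]_(#|D|, #|porbits sg|) :=
  \matrix_(i < #|D|, j < #|porbits sg|) ((Defs.arc i \in (enum_val j : {set D})) %:R).

Lemma porbits_mem (F : {set D}) x : F \in porbits sg -> x \in F -> F = porbit sg x.
Proof.
move=> /imsetP[y _ ->] hx; apply/eqP; by rewrite eq_sym eq_porbit_mem.
Qed.

Lemma inc_ortho j j' : j != j' -> \sum_k inc_mx k j * inc_mx k j' = 0.
Proof.
move=> hj; apply: big1 => k _; rewrite !mxE.
case hk: (Defs.arc k \in enum_val j); case hk': (Defs.arc k \in enum_val j'); rewrite ?mul0r ?mulr0 //.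
exfalso; move/negP: hj; apply; apply/eqP; apply: enum_val_inj.
by rewrite (porbits_mem (enum_valP j) hk) (porbits_mem (enum_valP j') hk').
Qed.

Lemma inc_pos j : 0 < \sum_k inc_mx k j ^+ 2.
Proof.
have /imsetP[x _ ex] := enum_valP j.
rewrite (bigD1 (enum_rank x)) //= ltr_pwDl ?sumr_ge0 // => [|k _]; last exact: sqr_ge0.
by rewrite mxE /Defs.arc enum_rankK ex porbit_id expr1n ltr01.
Qed.

Lemma inc_rowsum i : \sum_j inc_mx i j = 1.
Proof.
have F0in : porbit sg (Defs.arc i) \in porbits sg by apply: imset_f.
rewrite (bigD1 (enum_rank_in F0in (porbit sg (Defs.arc i)))) //=.
rewrite mxE enum_rankK_in // porbit_id big1 ?addr0 // => j hj.
rewrite mxE; case hk: (Defs.arc i \in enum_val j) => //; exfalso.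
move/negP: hj; apply; apply/eqP; apply: enum_val_inj.
by rewrite enum_rankK_in // (porbits_mem (enum_valP j) hk).
Qed.

Lemma inc_const : ((const_mx 1 : 'rV[R]_#|D|) <= inc_mx^T)%MS.
Proof.
apply/submxP; exists (const_mx 1); apply/matrixP => a i.
rewrite !mxE -[LHS](inc_rowsum i); apply: eq_bigr => j _; by rewrite !mxE mul1r.
Qed.

Lemma inc_inv (v : 'rV[R]_#|D|) d : (v <= inc_mx^T)%MS ->
  v 0 (enum_rank (sg d)) = v 0 (enum_rank d).
Proof.
move=> /submxP[w ->]; rewrite !mxE; apply: eq_bigr => j _; rewrite !mxE /Defs.arc !enum_rankK.
have /imsetP[x _ ex] := enum_valP j.
rewrite ex -!eq_porbit_mem.
by have := porbit_perm sg 1 d; rewrite expg1 => ->.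
Qed.
End Inc.
Section CN.
Variables (R : realType) (m n : nat) (A : 'M[R]_(m, n)).
Hypothesis hort : forall j j', j != j' -> \sum_k A k j * A k j' = 0.
Hypothesis hpos : forall j, 0 < \sum_k A k j ^+ 2.

Let c j := Num.sqrt (\sum_k A k j ^+ 2).
Let cpos j : 0 < c j. Proof. by rewrite /c sqrtr_gt0. Qed.
Let cneq0 j : c j != 0. Proof. by rewrite gt_eqF. Qed.

Lemma cn_orth : (col_normalize A)^T *m col_normalize A = 1%:M.
Proof.
apply/matrixP => j j'; rewrite !mxE.
have -> : \sum_k (col_normalize A)^T j k * col_normalize A k j'
   = (\sum_k A k j * A k j') / (c j * c j').
  rewrite mulr_suml; apply: eq_bigr => k _; rewrite !mxE -/(c j) -/(c j').
  by rewrite invfM; rewrite !mulrA; congr (_ * _); rewrite -!mulrA; congr (_ * _); rewrite mulrC.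
case: eqP => [<-|/eqP hj]; last by rewrite hort // mul0r.
rewrite -expr2 /c sqr_sqrtr ?sumr_ge0 // => [|k _]; last exact: sqr_ge0.
rewrite (eq_bigr (fun k => A k j ^+ 2)) ?divff ?gt_eqF // => k _; by rewrite expr2.
Qed.

Lemma cn_eq1 : col_normalize A = A *m diag_mx (\row_j (c j)^-1).
Proof. by apply/matrixP => i j; rewrite mul_mx_diag !mxE /c. Qed.

Lemma cn_eq2 : A = col_normalize A *m diag_mx (\row_j c j).
Proof. by apply/matrixP => i j; rewrite mul_mx_diag !mxE -/(c j) divfK. Qed.
End CN.

Lemma transfer_T (R : fieldType) m n (A B : 'M[R]_(m,n)) S1 S2 :
  B = A *m S1 -> A = B *m S2 -> (B^T :=: A^T)%MS.
Proof.
move=> e1 e2; apply/eqmxP; apply/andP; split.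
  by rewrite e1 trmx_mul submxMl.
by rewrite e2 trmx_mul submxMl.
Qed.

Lemma transfer_K (R : fieldType) m n (A B : 'M[R]_(m,n)) S1 S2 :
  B = A *m S1 -> A = B *m S2 -> (kermx B :=: kermx A)%MS.
Proof.
move=> e1 e2; apply/eqmxP; apply/andP; split; apply/sub_kermxP.
  by rewrite e2 mulmxA mulmx_ker mul0mx.
by rewrite e1 mulmxA mulmx_ker mul0mx.
Qed.
Lemma even_card (D : finType) (theta : {perm D}) :
  arc_reversal theta -> #|D| = (2 * #|[set d | enum_rank d < enum_rank (theta d)]|)%N.
Proof.
move=> hr; set A := [set d | _].
have eC : ~: A = theta @^-1: A.
  apply/setP => d.
  have ne : (enum_rank (theta d) : nat) != enum_rank d.
    by rewrite (inj_eq val_inj) (inj_eq enum_rank_inj) (hr d).2.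
  by rewrite !inE (hr d).1 -leqNgt leq_eqVlt (negbTE ne).
by rewrite -(cardsC A) eC card_preimset ?mul2n -?addnn //; exact: perm_inj.
Qed.

Lemma const_of_inv (R : realType) (D : finType) (theta rho : {perm D}) (v : 'rV[R]_#|D|) :
  (0 < #|D|)%N -> map_connected theta rho ->
  (forall d, v 0 (enum_rank (rho d)) = v 0 (enum_rank d)) ->
  (forall d, v 0 (enum_rank (face_perm theta rho d)) = v 0 (enum_rank d)) ->
  (v <= (const_mx 1 : 'rV[R]_#|D|))%MS.
Proof.
move=> hD hc hrho hf.
pose h d := v 0 (enum_rank d).
have hth d : h (theta d) = h d.
  by rewrite /h -hrho -(hf d) /face_perm permM.
have hall d e : h e = h d.
  have /connectP[p hp ->] := hc d e.
  elim: p d hp => [|x p IH] d //= /andP[hx hp].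
  rewrite IH //; case/orP: hx => /eqP ->; [exact: hrho | exact: hth].
have -> : v = v 0 (Ordinal hD) *: (const_mx 1 : 'rV[R]_#|D|).
  apply/matrixP => a i; rewrite !mxE mulr1 (ord1 a).
  by have := hall (enum_val (Ordinal hD)) (enum_val i); rewrite /h !enum_valK.
exact: scalemx_sub.
Qed.

Theorem theorem3p1 (R : realType) (D : finType) (theta rho : {perm D}) (g : nat) :
  (0 < #|D|)%N ->
  arc_reversal theta ->
  map_connected theta rho ->
  map_simple theta rho ->
  circular theta rho ->
  (#|vertices rho| + #|faces theta rho| + 2 * g = 2 + #|D| %/ 2)%N ->
  let M := arc_face_mx R theta rho in
  let N := arc_tail_mx R rho in
  let U := transition_mx R theta rho in
  let E := kermx (U - 1%:M)^T in
  let C := (M^T :&: N^T)%MS in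
  let K := (kermx M :&: kermx N)%MS in
  [/\ (E :=: C + K)%MS, mxdirect (C + K),
      \rank E = (#|D| %/ 2 + 2 * g)%N
    & (C :=: (const_mx 1 : 'rV[R]_#|D|))%MS].
Proof.
move=> hD hr hc _ _ heu M N U E C K.
have eM : M = inc_mx R (face_perm theta rho) by [].
have eN : N = inc_mx R rho by [].
have oM := @inc_ortho R D (face_perm theta rho); rewrite -eM in oM.
have pM := @inc_pos R D (face_perm theta rho); rewrite -eM in pM.
have oN := @inc_ortho R D rho; rewrite -eN in oN.
have pN := @inc_pos R D rho; rewrite -eN in pN.
have hAo := cn_orth oM pM.
have hBo := cn_orth oN pN.
have [eE hcap] := decomp hAo hBo.
have eTM := transfer_T (cn_eq1 M) (cn_eq2 pM).
have eTN := transfer_T (cn_eq1 N) (cn_eq2 pN).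
have eKM := transfer_K (cn_eq1 M) (cn_eq2 pM).
have eKN := transfer_K (cn_eq1 N) (cn_eq2 pN).
have eC : (C :=: (col_normalize M)^T :&: (col_normalize N)^T)%MS.
  by apply: cap_eqmx; apply: eqmx_sym.
have eK : (K :=: kermx (col_normalize M) :&: kermx (col_normalize N))%MS.
  by apply: cap_eqmx; apply: eqmx_sym.
have eE' : (E :=: C + K)%MS.
  apply: eqmx_trans eE _; apply: eqmx_sym; exact: adds_eqmx.
have hCc : (C :=: (const_mx 1 : 'rV[R]_#|D|))%MS.
  apply/eqmxP; apply/andP; split.
    apply/row_subP => i; apply: const_of_inv hD hc _ _ => d.
      apply: (@inc_inv R D rho); rewrite -eN.
      by apply: submx_trans (row_sub i C) _; exact: capmxSr.
    apply: (@inc_inv R D (face_perm theta rho)); rewrite -eM.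
    by apply: submx_trans (row_sub i C) _; exact: capmxSl.
  rewrite sub_capmx eM eN !inc_const //.
have rC : \rank C = 1%N.
  rewrite hCc rank_rV; case: eqP => // /matrixP /(_ 0 (Ordinal hD)).
  by rewrite !mxE => /eqP; rewrite oner_eq0.
split => //.
- apply/mxdirect_addsP; apply/eqP; rewrite -mxrank_eq0 (cap_eqmx eC eK) mxrank_eq0.
  by rewrite hcap.
- rewrite eE'.
  have h1 := mxrank_sum_cap C K.
  rewrite (cap_eqmx eC eK) hcap mxrank0 addn0 in h1.
  rewrite h1 eK rank_kercap.
  have h2 := mxrank_sum_cap (col_normalize M)^T (col_normalize N)^T.
  rewrite -eC rC !rank_orth // in h2.
  have ev := even_card hr.
  move: heu h2; rewrite /vertices /faces => heu h2.
  rewrite rC; move: h2; set r := \rank _ => h2.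
  clearbody r; move: heu h2 ev.
  set a := #|[set _ | _]|; set v := #|porbits rho|; set f := #|porbits _|.
  lia.
Qed.
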